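(* Let $S$ be a commutative ring and $p,q\in S$. (1) If $c\in V[p,q]$, then there exist $x,y,z\in S$ with $px+qy=-c$ and $xy-z^2=-c^2$; there also exist $x_1,y_1,z_1\in S$ with $px_1+qy_1=c$ and $x_1y_1-z_1^2=-c^2$. (2) If $V[p,q]$ contains a unit of $S$, then there exist $x_2,y_2,z_2\in S$ with $px_2+qy_2=x_2y_2-z_2^2=-1$.
   Context: $V[p,q]=\{pr_1^2+qr_2^2: r_1,r_2\in S\}$. *)

(* Defs.v *)
From HB Require Import structures.
From mathcomp Require Import all_boot all_order all_algebra.
Set Implicit Arguments. Unset Strict Implicit. Unset Printing Implicit Defensive.
Import GRing.Theory.
Local Open Scope ring_scope.

Definition inV (S : comPzRingType) (p q c : S) : Prop :=
  exists r1 r2 : S, c = p * r1 ^+ 2 + q * r2 ^+ 2.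

(* c is a unit of S (S need not carry a computable inverse structure) *)
Definition is_unit_of (S : comPzRingType) (c : S) : Prop :=
  exists d : S, c * d = 1.

(* Main.v *)
Require Import Defs.
From HB Require Import structures.
From mathcomp Require Import all_boot all_order all_algebra.
From Stdlib Require Import Ring.
Set Implicit Arguments. Unset Strict Implicit. Unset Printing Implicit Defensive.
Import GRing.Theory.
Local Open Scope ring_scope.

Section Aux.
Context (S : comPzRingType).

Lemma crt : @ring_theory (Algebra.BaseAddMagma.sort (GRing_PzSemiRing__to__Algebra_BaseAddMagma (GRing_ComPzRing__to__GRing_PzSemiRing S))) 0 1 +%R *%R (fun x y => x - y) -%R eq.
Proof. split=> //; [exact: add0r|exact: addrC|exact: addrA|exact: mul1r|exact: mulrC|exact: mulrA|exact: mulrDl|exact: subrr]. Qed.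

Add Ring Sr : crt.

Lemma key (s p q a b : S) : s * s = 1 ->
  let c := p * a ^+ 2 + q * b ^+ 2 in
  let X := s * a ^+ 2 + (1+1) * (a * q * b) in
  let Y := s * b ^+ 2 - (1+1) * (p * a * b) in
  let Z := s * a * b - p * a ^+ 2 + q * b ^+ 2 in
  p * X + q * Y = s * c /\ X * Y - Z ^+ 2 = - c ^+ 2.
Proof.
move=> hs c X Y Z; rewrite /c /X /Y /Z !expr2; split; first by ring.
transitivity ((s*s) * (a*a*b*b) - s*s*a*a*b*b - (p*a*a + q*b*b)*(p*a*a+q*b*b)); first by ring.
rewrite hs; ring.
Qed.
End Aux.

Theorem corollary6p17 (S : comPzRingType) (p q : S) :
  (forall c : S, inV p q c ->
     (exists x y z : S, p * x + q * y = - c /\ x * y - z ^+ 2 = - c ^+ 2) /\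
     (exists x1 y1 z1 : S, p * x1 + q * y1 = c /\ x1 * y1 - z1 ^+ 2 = - c ^+ 2)) /\
  ((exists u : S, inV p q u /\ is_unit_of u) ->
     exists x2 y2 z2 : S, p * x2 + q * y2 = -1 /\ x2 * y2 - z2 ^+ 2 = -1).
Proof.
have part1 : forall c : S, inV p q c ->
     (exists x y z : S, p * x + q * y = - c /\ x * y - z ^+ 2 = - c ^+ 2) /\
     (exists x1 y1 z1 : S, p * x1 + q * y1 = c /\ x1 * y1 - z1 ^+ 2 = - c ^+ 2).
  move=> c [a [b ->]]; split.
  - have hm : (-1) * (-1) = 1 :> S by rewrite mulrNN mulr1.
    have [h1 h2] := key p q a b hm.
    exists ((-1) * a ^+ 2 + (1+1) * (a * q * b)), ((-1) * b ^+ 2 - (1+1) * (p * a * b)),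
      ((-1) * a * b - p * a ^+ 2 + q * b ^+ 2); split; [by rewrite h1 mulN1r|exact: h2].
  - have [h1 h2] := key p q a b (mulr1 (1 : S)).
    exists (1 * a ^+ 2 + (1+1) * (a * q * b)), (1 * b ^+ 2 - (1+1) * (p * a * b)),
      (1 * a * b - p * a ^+ 2 + q * b ^+ 2); split; [by rewrite h1 mul1r|exact: h2].
split=> // -[u [hu [d hd]]].
have [[x [y [z [e1 e2]]]] _] := part1 u hu.
exists (d * x), (d * y), (d * z); split.
  by rewrite mulrCA [q * _]mulrCA -mulrDr e1 mulrN mulrC hd.
transitivity ((d*d) * (x * y - z ^+ 2)).
  by rewrite !expr2 mulrBr !mulrA; congr (_ - _); rewrite -!mulrA; congr (_ * _); rewrite mulrCA.
by rewrite e2 mulrN -expr2 -exprMn mulrC hd expr1n.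
Qed.
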